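(* Let $w=(w_{ij})$ be an $m\times n$ matrix of positive integers and $\varepsilon_1,\dots,\varepsilon_m\in\{1,-1\}$, and suppose $L_W(z)=\sum_{i=1}^m\varepsilon_i\prod_{j=1}^n\frac{z^{w_{ij}}+1}{z^{w_{ij}}-1}$ is constant in $z$. If $L_W(z)\neq 0$, then $n$ is even.
   Context: $W=\{w,s\}$ with $s=\{\varepsilon_1,\dots,\varepsilon_m\}$; $W$ is called $L$-rigid if $L_W(z)$ does not depend on $z$. *)

(* Defs.v *)
From HB Require Import structures.
From mathcomp Require Import all_boot all_order all_algebra all_field.
Set Implicit Arguments. Unset Strict Implicit. Unset Printing Implicit Defensive.
Import Order.TTheory GRing.Theory Num.Theory.
Local Open Scope ring_scope.

Definition LW (m n : nat) (w : 'M[nat]_(m, n)) (eps : 'I_m -> algC) (z : algC) : algC :=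
  \sum_(i < m) eps i * \prod_(j < n) ((z ^+ w i j + 1) / (z ^+ w i j - 1)).

(* Main.v *)
Require Import Defs.
From HB Require Import structures.
From mathcomp Require Import all_boot all_order all_algebra all_field.
From mathcomp Require Import ring.
Import Order.TTheory GRing.Theory Num.Theory.
Local Open Scope ring_scope.

Lemma two_pow_neq1 (k : nat) : (0 < k)%N -> (2 : algC) ^+ k != 1.
Proof.
move=> hk; rewrite -natrX -[1 : algC]/(1%:R) eqr_nat.
case: k hk => // k _; rewrite expnS.
have := expn_gt0 2 k; case: (2 ^ k)%N => // j _.
by rewrite mul2n doubleS.
Qed.

Lemma flip_term (a : algC) : a != 1 -> a != 0 ->
  (a^-1 + 1) / (a^-1 - 1) = - ((a + 1) / (a - 1)).
Proof.
move=> h1 h0.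
have ha : a - 1 != 0 by rewrite subr_eq0.
have hb : 1 - a != 0 by rewrite subr_eq0 eq_sym.
have -> : a^-1 + 1 = (1 + a) / a by field.
have -> : a^-1 - 1 = (1 - a) / a by field.
field; rewrite hb ha h0 //.
Qed.

Theorem mainTheorem3 (m n : nat) (w : 'M[nat]_(m, n)) (eps : 'I_m -> algC)
  (hw : forall i j, (0 < w i j)%N)
  (heps : forall i, eps i = 1 \/ eps i = -1)
  (c : algC)
  (hconst : forall z : algC, (forall i j, z ^+ w i j != 1) -> LW w eps z = c)
  (hc : c != 0) :
  ~~ odd n.
Proof.
have h2 := hconst 2 (fun i j => @two_pow_neq1 _ (hw i j)).
have h2i : LW w eps 2^-1 = c.
  apply: hconst => i j; rewrite exprVn invr_eq1.
  exact: two_pow_neq1.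
have hrel : LW w eps 2^-1 = (-1) ^+ n * LW w eps 2.
  rewrite /LW mulr_sumr; apply: eq_bigr => i _.
  rewrite mulrCA; congr (_ * _).
  rewrite -[n in (-1) ^+ n]card_ord -prodrN.
  apply: eq_bigr => j _; rewrite exprVn; apply: flip_term.
    exact: two_pow_neq1.
  apply: expf_neq0. by rewrite pnatr_eq0.
apply/negP => hodd.
move: hrel; rewrite h2 h2i -signr_odd hodd expr1 mulN1r => /eqP.
rewrite -addr_eq0 -mulr2n -mulr_natr mulf_eq0 pnatr_eq0 orbF. by apply/negP.
Qed.
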